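(* Let $1\leqslant k\leqslant d$ and let $F\subseteq S^d$ be a $k$-neighborly family of strings of maximum possible size (i.e., no $k$-neighborly family in $S^d$ has more elements). Then every string in $F$ has at most $d-k$ jokers.
   Context: Let $S=\{0,1,\ast\}$ and let $S^d$ be the set of strings of length $d$ over $S$; the symbol $\ast$ is called a joker. For $x,y\in S^d$, $d(x,y)$ is the number of positions $i\in[d]$ such that one of $x_i,y_i$ equals $0$ and the other equals $1$. A family $F\subseteq S^d$ is $k$-neighborly if $1\leqslant d(x,y)\leqslant k$ for all distinct $x,y\in F$. *)

(* Defs.v *)
From HB Require Import structures.
From mathcomp Require Import all_boot.
Set Implicit Arguments. Unset Strict Implicit. Unset Printing Implicit Defensive.

Inductive sym := S0 | S1 | Joker.

Definition sym_to_ord (s : sym) : 'I_3 :=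
  match s with S0 => inord 0 | S1 => inord 1 | Joker => inord 2 end.
Definition ord_to_sym (i : 'I_3) : sym :=
  match val i with 0 => S0 | 1 => S1 | _ => Joker end.
Lemma sym_ordK : cancel sym_to_ord ord_to_sym.
Proof. by case; rewrite /ord_to_sym /= inordK. Qed.
HB.instance Definition _ := Finite.copy sym (can_type sym_ordK).

Definition str (d : nat) := {ffun 'I_d -> sym}.

Definition conflict (a b : sym) : bool :=
  match a, b with S0, S1 | S1, S0 => true | _, _ => false end.

Definition dist (d : nat) (x y : str d) : nat :=
  #|[set i : 'I_d | conflict (x i) (y i)]|.

Definition neighborly (d k : nat) (F : {set str d}) : Prop :=
  forall x y, x \in F -> y \in F -> x != y -> 1 <= dist x y <= k.

Definition jokers (d : nat) (x : str d) : nat :=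
  #|[set i : 'I_d | x i == Joker]|.

(* Main.v *)
Require Import Defs.
From mathcomp Require Import all_boot.
From mathcomp Require Import zify.
Set Implicit Arguments. Unset Strict Implicit.

Definition upd d (x : str d) (i : 'I_d) (s : sym) : str d :=
  [ffun t => if t == i then s else x t].

Lemma conflictC a b : conflict a b = conflict b a.
Proof. by case: a; case: b. Qed.

Lemma distC d (x y : str d) : dist x y = dist y x.
Proof. by rewrite /dist; apply: eq_card => t; rewrite !inE conflictC. Qed.

Lemma dist_le d (x y : str d) : dist x y <= d - jokers x.
Proof.
have H : [set i | conflict (x i) (y i)] \subset ~: [set i | x i == Joker].
  apply/subsetP => t; rewrite !inE => h; apply/eqP => e; move: h; rewrite e; by case: (y t).
have := subset_leq_card H.
have := cardsC [set i | x i == Joker]; rewrite card_ord /dist /jokers.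
set a := #|[set i | x i == Joker]|; set b := #|~: _|; set c := #|[set i | conflict _ _]|. clearbody a b c. lia.
Qed.

Lemma jokers_upd d (x : str d) i s : jokers x <= (jokers (upd x i s)).+1.
Proof.
have H : [set t | x t == Joker] \subset i |: [set t | upd x i s t == Joker].
  apply/subsetP => t; rewrite !inE /upd ffunE; case: (t =P i) => //= ->.
rewrite /jokers; apply: (leq_trans (subset_leq_card H)); rewrite cardsU1; case: (_ \notin _); rewrite ?add1n ?add0n //.
Qed.

Lemma dist_upd d (x y : str d) i s : x i = Joker -> dist x y <= dist (upd x i s) y.
Proof.
move=> xi; apply: subset_leq_card; apply/subsetP => t; rewrite !inE /upd ffunE.
by case: (t =P i) => // ->; rewrite xi.
Qed.

Lemma dist_self_upd d (x : str d) i s : x i = Joker -> dist x (upd x i s) = 0.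
Proof.
move=> xi; apply/eqP; rewrite cards_eq0; apply/eqP/setP => t.
rewrite !inE /upd ffunE; case: (t =P i) => [->|_]; first by rewrite xi.
by case: (x t).
Qed.

Theorem lemma1 (d k : nat) (F : {set str d}) :
  1 <= k <= d ->
  neighborly k F ->
  (forall G : {set str d}, neighborly k G -> #|G| <= #|F|) ->
  forall x, x \in F -> jokers x <= d - k.
Proof.
move=> /andP[k1 kd] nF maxF x xF; rewrite leqNgt; apply/negP => hj.
have : 0 < jokers x by lia.
rewrite /jokers card_gt0 => /set0Pn[i]; rewrite inE => /eqP xi.
have notin : forall s, upd x i s \notin F :\ x.
  move=> s; apply/negP; rewrite !inE => /andP[ne yF].
  have := nF _ _ yF xF ne; rewrite distC dist_self_upd //.
have ne01 : upd x i S0 != upd x i S1.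
  by apply/negP => /eqP /ffunP /(_ i); rewrite !ffunE eqxx.
pose G := upd x i S0 |: (upd x i S1 |: (F :\ x)).
have key : forall s, s != Joker -> forall v, v \in G -> v != upd x i s ->
    1 <= dist (upd x i s) v <= k.
  move=> s sJ v vG nev; apply/andP; split; last first.
    have := dist_le (upd x i s) v; have := jokers_upd x i s; lia.
  move: vG; rewrite !inE => /orP[/eqP ev|/orP[/eqP ev|/andP[vx vF]]].
  - rewrite card_gt0; apply/set0Pn; exists i; rewrite inE ev /upd !ffunE eqxx.
    move: nev; rewrite ev; case: s sJ => //; by rewrite eqxx.
  - rewrite card_gt0; apply/set0Pn; exists i; rewrite inE ev /upd !ffunE eqxx.
    move: nev; rewrite ev; case: s sJ => //; by rewrite eqxx.
  - have := nF _ _ xF vF; rewrite eq_sym vx => /(_ isT) /andP[h _].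
    exact: leq_trans h (@dist_upd _ x v i s xi).
have memG : forall u, u \in G -> u \in [set upd x i S0; upd x i S1] \/ u \in F :\ x.
  move=> u; rewrite /G in_setU1 in_setU1 => /orP[e|/orP[e|e]].
  - by left; rewrite !inE e.
  - by left; rewrite !inE e orbT.
  - by right.
have S0J : S0 != Joker by apply/eqP.
have S1J : S1 != Joker by apply/eqP.
have nG : neighborly k G.
  move=> u v uG vG uv.
  case: (memG u uG) => [|uF].
    rewrite !inE => /orP[]/eqP eu; rewrite eu; apply: key => //; by rewrite -eu eq_sym.
  case: (memG v vG) => [|vF].
    rewrite !inE => /orP[]/eqP ev; rewrite distC ev; apply: key => //; by rewrite -ev.
  move: uF vF; rewrite !inE => /andP[_ uF] /andP[_ vF]; exact: nF.
have := maxF G nG.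
rewrite /G !cardsU1 (cardsD1 x F) xF (negPf (notin S1)).
rewrite in_setU1 negb_or ne01 (negPf (notin S0)) /=.
by rewrite add1n ltnn.
Qed.
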